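(* Let $n\ge2$, distinct real $a_1,\dots,a_n$, $F(a)=\sum_{k=0}^nA_ka^k=\prod_{i=1}^n(a-a_i)$, signs $\epsilon_i\in\{\pm1\}$, reals $\xi_i$, $\Delta_i=\epsilon_i(a-a_i)$, $x=\sum_i\xi_i\Delta_i^{-1/2}$ on an open interval $I\subset(0,\infty)$ where all $\Delta_i>0$ and $\dot x\ne0$. Let $H=\Pi^2+aP_y^2$, $\Pi=\frac a{\dot x}P_a$, and let $G,Q_1,Q_2,S_1,S_2$ be defined by $$G=\sum_{k=0}^nA_{n-k}H^{n-k}P_y^{2k},\ Q_1=\sum_{k=1}^n\tilde b_kH^{n-k}\Pi P_y^{2k-1},\ Q_2=\sum_{k=1}^n\tilde c_kH^{n-k}P_y^{2k},\ S_1=Q_1+yG,\ S_2=Q_2+yQ_1+\tfrac{y^2}2G,$$ with $\tilde b_k=(-1)^k\sum_i\frac{\xi_i}{\sqrt{\Delta_i}}\sigma^i_{k-1}$ and $\tilde c_k=\frac{(-1)^{k+1}}2\big(\sum_i\frac{\xi_i^2}{\Delta_i}\sigma^i_{k-1}+\sum_{i\ne j}\frac{\xi_i\xi_j}{\sqrt{\Delta_i\Delta_j}}(\sigma^{ij}_{k-1}+a\sigma^{ij}_{k-2})\big)$. Then $$S_1^2-2G\,S_2=A_n^2\sum_{k,l=1}^n\mathcal{Q}_{kl}\,H^{2n-k-l}P_y^{2(k+l)},\qquad \mathcal{Q}_{kl}=(-1)^{k+l+1}\sum_{i=1}^n\epsilon_i\xi_i^2\,\sigma^i_{k-1}\sig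ma^i_{l-1}.$$
   Context: Symmetric functions: for each $i$, $\sigma^i_m$ ($-1\le m\le n$) by $\prod_{l\neq i}(a-a_l)=\sum_{m=0}^{n-1}(-1)^m\sigma^i_ma^{n-1-m}$ with $\sigma^i_{-1}=\sigma^i_n=0$; for $i\ne j$, $\sigma^{ij}_m$ ($-2\le m\le n$) by $\prod_{l\ne i,j}(a-a_l)=\sum_{m=0}^{n-2}(-1)^m\sigma^{ij}_ma^{n-2-m}$ with $\sigma^{ij}_{-2}=\sigma^{ij}_{-1}=\sigma^{ij}_{n-1}=\sigma^{ij}_n=0$. (Here $A_n=1$.) *)

(* Defs.v *)
From HB Require Import structures.
From mathcomp Require Import all_boot all_order all_algebra.
From mathcomp Require Import all_classical all_reals all_analysis.
Set Implicit Arguments. Unset Strict Implicit. Unset Printing Implicit Defensive.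
Import Order.TTheory GRing.Theory Num.Theory.
Local Open Scope ring_scope.

Section Defs.
Variables (R : realType) (n : nat) (a_ : 'I_n -> R).

Definition Fpoly : {poly R} := \prod_(i < n) ('X - (a_ i)%:P).
Definition Acoef (k : nat) : R := Fpoly`_k.

(* sigma^i_m : prod_{l<>i}(a - a_l) = sum_{m=0}^{n-1} (-1)^m sigma^i_m a^{n-1-m},
   with sigma^i_m = 0 for m < 0 or m > n-1 (in particular sigma^i_{-1}=sigma^i_n=0). *)
Definition sig1 (i : 'I_n) (m : int) : R :=
  match m with
  | Posz m' => if (m' < n)%N then
                 (-1) ^+ m' * (\prod_(l < n | l != i) ('X - (a_ l)%:P))`_(n.-1 - m')
               else 0
  | Negz _ => 0
  end.

(* sigma^{ij}_m : prod_{l<>i,j}(a - a_l) = sum_{m=0}^{n-2} (-1)^m sigma^{ij}_m a^{n-2-m},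
   and 0 outside 0 <= m <= n-2. *)
Definition sig2 (i j : 'I_n) (m : int) : R :=
  match m with
  | Posz m' => if (m'.+2 <= n)%N then
                 (-1) ^+ m' *
                 (\prod_(l < n | (l != i) && (l != j)) ('X - (a_ l)%:P))`_(n.-2 - m')
               else 0
  | Negz _ => 0
  end.

Variables (eps xi : 'I_n -> R).

Definition Delta (i : 'I_n) (a : R) : R := eps i * (a - a_ i).

Definition xfun (a : R) : R := \sum_(i < n) xi i / Num.sqrt (Delta i a).

Definition btilde (a : R) (k : nat) : R :=
  (-1) ^+ k * \sum_(i < n) xi i / Num.sqrt (Delta i a) * sig1 i (k%:Z - 1).

Definition ctilde (a : R) (k : nat) : R :=
  (-1) ^+ k.+1 / 2 *
  (\sum_(i < n) xi i ^+ 2 / Delta i a * sig1 i (k%:Z - 1)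
   + \sum_(i < n) \sum_(j < n | j != i)
       xi i * xi j / Num.sqrt (Delta i a * Delta j a)
       * (sig2 i j (k%:Z - 1) + a * sig2 i j (k%:Z - 2))).

Definition Qkl (k l : nat) : R :=
  (-1) ^+ (k + l).+1 *
  \sum_(i < n) eps i * xi i ^+ 2 * sig1 i (k%:Z - 1) * sig1 i (l%:Z - 1).

Definition Pi_ (a Pa : R) : R := a / derive1 xfun a * Pa.
Definition Ham (a Pa Py : R) : R := Pi_ a Pa ^+ 2 + a * Py ^+ 2.

Definition Gfun (a Pa Py : R) : R :=
  \sum_(0 <= k < n.+1) Acoef (n - k) * Ham a Pa Py ^+ (n - k) * Py ^+ (2 * k).
Definition Q1fun (a Pa Py : R) : R :=
  \sum_(1 <= k < n.+1) btilde a k * Ham a Pa Py ^+ (n - k) * Pi_ a Pa * Py ^+ (2 * k - 1).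
Definition Q2fun (a Pa Py : R) : R :=
  \sum_(1 <= k < n.+1) ctilde a k * Ham a Pa Py ^+ (n - k) * Py ^+ (2 * k).
Definition S1fun (a Pa Py y : R) : R := Q1fun a Pa Py + y * Gfun a Pa Py.
Definition S2fun (a Pa Py y : R) : R :=
  Q2fun a Pa Py + y * Q1fun a Pa Py + y ^+ 2 / 2 * Gfun a Pa Py.

End Defs.

(* Main.v *)
Require Import Defs.
From HB Require Import structures.
From mathcomp Require Import all_boot all_order all_algebra.
From mathcomp Require Import all_classical all_reals all_analysis.
From mathcomp Require Import ring lra zify.
Import Order.TTheory GRing.Theory Num.Theory numFieldNormedType.Exports.
Local Open Scope ring_scope.

Lemma hsum (R : nzRingType) (q : {poly R}) (N : nat) (c : nat -> R) (z : R) :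
  (size q <= N)%N -> (forall m, (m < N)%N -> c m = q`_(N.-1 - m)) ->
  \sum_(m < N) c m * z ^+ (N.-1 - m) = q.[z].
Proof.
move=> hs hc; rewrite (horner_coef_wide _ hs).
case: N hs hc => [|N] hs hc; first by rewrite !big_ord0.
rewrite [RHS](reindex_inj rev_ord_inj) /=.
apply: eq_bigr => m _; rewrite hc //= subSS.
Qed.

Lemma signsq (R : nzRingType) (k : nat) : (-1) ^+ k * (-1) ^+ k = 1 :> R.
Proof. by rewrite -exprD -signr_odd oddD addbb. Qed.

Lemma sum2gen (R : comNzRingType) (M : nat) (q : {poly R}) (s : int -> R) (a z : R) :
  (1 <= M)%N -> (size q <= M)%N ->
  (forall m : nat, (m < M)%N -> s m = (-1)^+m * q`_(M.-1 - m)) -> s M = 0 -> s (-1) = 0 ->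
  \sum_(k < M.+1) (-1)^+k * (s k + a * s (k%:Z - 1)) * z^+(M - k) = (z - a) * q.[z].
Proof.
move=> hM hs hc hsM hsm.
have hq : \sum_(k < M) (-1)^+k * s k * z^+(M.-1 - k) = q.[z].
  apply: (@hsum _ q M (fun k => (-1)^+k * s k)) => // m hm; rewrite hc // mulrA signsq mul1r //.
under eq_bigr do rewrite mulrDr mulrDl.
rewrite big_split /= big_ord_recr big_ord_recl /= hsM mulr0 mul0r addr0.
rewrite sub0r hsm mulr0 mulr0 mul0r add0r.
rewrite mulrBl -hq mulr_sumr mulr_sumr -sumrN.
congr (_ + _); apply: eq_bigr => k _.
  rewrite [z ^+ _](_ : _ = z * z ^+ (M.-1 - k)); first by ring.
  rewrite -exprS; congr (_ ^+ _); have := ltn_ord k; lia.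
rewrite /bump /= add1n (_ : (k.+1%:Z - 1) = k); last lia.
rewrite (_ : (M - k.+1 = M.-1 - k)%N); last lia.
rewrite exprS; ring.
Qed.

Set Implicit Arguments. Unset Strict Implicit.

Section Poly.
Variables (R : realType) (n : nat) (a_ : 'I_n -> R).
Definition PP (i : 'I_n) : {poly R} := \prod_(l < n | l != i) ('X - (a_ l)%:P).
Definition PP2 (i j : 'I_n) : {poly R} := \prod_(l < n | (l != i) && (l != j)) ('X - (a_ l)%:P).

Lemma sizeF : size (Fpoly a_) = n.+1.
Proof. by rewrite /Fpoly size_prod_XsubC /index_enum unlock /= -enumT size_enum_ord. Qed.

Lemma FPP i : Fpoly a_ = ('X - (a_ i)%:P) * PP i.
Proof. by rewrite /Fpoly (bigD1 i) //. Qed.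

Lemma PPP i j : j != i -> PP i = ('X - (a_ j)%:P) * PP2 i j.
Proof. by move=> hj; rewrite /PP (bigD1 j) //. Qed.

Lemma PP2C i j : PP2 i j = PP2 j i.
Proof. by apply: eq_bigl => l; rewrite andbC. Qed.

Lemma sizeMX (c : R) (p : {poly R}) : p \is monic -> size (('X - c%:P) * p) = (size p).+1.
Proof. by move=> hp; rewrite size_Mmonic ?polyXsubC_eq0 // size_XsubC. Qed.

Lemma sizePP i : size (PP i) = n.
Proof.
have := sizeF; rewrite (FPP i) sizeMX; first by case.
exact: monic_prod_XsubC.
Qed.

Lemma sizePP2 i j : j != i -> size (PP2 i j) = n.-1.
Proof.
move=> hj; have := sizePP i; rewrite (@PPP i j hj) sizeMX; first by move=> <-.
exact: monic_prod_XsubC.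
Qed.

Lemma Acoef_n : Acoef a_ n = 1.
Proof.
have := monic_prod_XsubC (index_enum 'I_n) predT a_.
by rewrite /Acoef -/(Fpoly a_) => /monicP; rewrite lead_coefE sizeF.
Qed.

Lemma sum1 i z : \sum_(k < n) (-1)^+k * sig1 a_ i k * z^+(n.-1 - k) = (PP i).[z].
Proof.
apply: (@hsum _ (PP i) n (fun k => (-1)^+k * sig1 a_ i k)); first by rewrite sizePP.
by move=> m hm; rewrite /sig1 hm mulrA signsq mul1r.
Qed.

Lemma sum2 i j z a : (2 <= n)%N -> j != i ->
  \sum_(k < n) (-1)^+k * (sig2 a_ i j k + a * sig2 a_ i j (k%:Z - 1)) * z^+(n.-1 - k)
  = (z - a) * (PP2 i j).[z].
Proof.
move=> hn hj.
have e : n = n.-1.+1 by lia.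
have := (@sum2gen R n.-1 (PP2 i j) (sig2 a_ i j) a z).
rewrite -e; apply.
- lia.
- by rewrite sizePP2.
- move=> m hm; rewrite /sig2 (_ : (m.+2 <= n)%N); last lia.
  by [].
- rewrite /sig2 (_ : (n.-1.+2 <= n)%N = false) //; lia.
- by [].
Qed.
End Poly.

Unset Implicit Arguments. Set Strict Implicit.
Local Open Scope classical_set_scope.

Arguments sig1 : simpl never.
Arguments sig2 : simpl never.

Theorem proposition12 (R : realType) (n : nat) (a_ eps xi : 'I_n -> R) (I : set R) :
  (2 <= n)%N ->
  injective a_ ->
  (forall i, eps i = 1 \/ eps i = -1) ->
  open I -> is_interval I -> I `<=` [set t : R | 0 < t] ->
  (forall a, I a -> forall i, 0 < Delta a_ eps i a) ->
  (forall a, I a -> derive1 (xfun a_ eps xi) a != 0) ->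
  forall a, I a -> forall Pa Py y : R,
    S1fun a_ eps xi a Pa Py y ^+ 2
      - 2 * Gfun a_ eps xi a Pa Py * S2fun a_ eps xi a Pa Py y
    = Acoef a_ n ^+ 2 *
      \sum_(1 <= k < n.+1) \sum_(1 <= l < n.+1)
        Qkl a_ eps xi k l * Ham a_ eps xi a Pa Py ^+ (2 * n - k - l)
          * Py ^+ (2 * (k + l)).
Proof.
move=> hn _ heps _ _ _ hD _ a Ia Pa Py y.
have hDa := hD a Ia.
rewrite Acoef_n expr1n mul1r.
have -> : S1fun a_ eps xi a Pa Py y ^+ 2 - 2 * Gfun a_ eps xi a Pa Py * S2fun a_ eps xi a Pa Py y
  = Q1fun a_ eps xi a Pa Py ^+ 2 - 2 * Gfun a_ eps xi a Pa Py * Q2fun a_ eps xi a Pa Py.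
  by rewrite /S1fun /S2fun; field.
set H := Ham a_ eps xi a Pa Py.
set Pi := Pi_ a_ eps xi a Pa.
have hH : H = Pi ^+ 2 + a * Py ^+ 2 by [].
case: (eqVneq Py 0) => [hp0|hp].
  have -> : Q1fun a_ eps xi a Pa Py = 0.
    rewrite /Q1fun big_nat big1 // => k /andP[hk _].
    by rewrite hp0 expr0n (_ : (2 * k - 1 == 0)%N = false) ?mulr0 //; apply/negbTE; lia.
  have -> : Q2fun a_ eps xi a Pa Py = 0.
    rewrite /Q2fun big_nat big1 // => k /andP[hk _].
    by rewrite hp0 expr0n (_ : (2 * k == 0)%N = false) ?mulr0 //; apply/negbTE; lia.
  rewrite big_nat big1 ?mulr0 ?expr0n /= ?subrr // => k /andP[hk _].
  rewrite big_nat big1 // => l /andP[hl _].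
  by rewrite hp0 expr0n (_ : (2 * (k + l) == 0)%N = false) ?mulr0 //; apply/negbTE; lia.
have hp2 : Py ^+ 2 != 0 by rewrite expf_neq0.
set z := H / Py ^+ 2.
have hHz : H = z * Py ^+ 2 by rewrite /z divfK.
have hG : Gfun a_ eps xi a Pa Py = Py ^+ (2 * n) * (Fpoly a_).[z].
  rewrite /Gfun -/H big_mkord -(@hsum _ (Fpoly a_) n.+1 (fun k => (Fpoly a_)`_(n - k)) z) ?sizeF //=.
  rewrite mulr_sumr; apply: eq_bigr => k _.
  have hk := ltn_ord k.
  rewrite /Acoef hHz exprMn -exprM.
  rewrite (_ : Py ^+ (2 * n) = Py ^+ (2 * (n - k)) * Py ^+ (2 * k)); last first.
    by rewrite -exprD; congr (_ ^+ _); lia.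
  ring.
have hQ1 : Q1fun a_ eps xi a Pa Py = - (Pi / Py) * Py ^+ (2 * n) *
    \sum_(i < n) xi i / Num.sqrt (Delta a_ eps i a) * (PP a_ i).[z].
  rewrite /Q1fun -/H -/Pi big_add1 /= big_mkord.
  under [X in _ = _ * X]eq_bigr => i _ do rewrite -(@sum1 _ _ a_ i z) mulr_sumr.
  rewrite exchange_big mulr_sumr; apply: eq_bigr => k _.
  have hk := ltn_ord k.
  rewrite /btilde (_ : (k.+1%:Z - 1) = k); last lia.
  rewrite (_ : \sum_(i < n) xi i / Num.sqrt (Delta a_ eps i a) * ((-1) ^+ k * sig1 a_ i k * z ^+ (n.-1 - k))
     = (\sum_(i < n) xi i / Num.sqrt (Delta a_ eps i a) * sig1 a_ i k) * ((-1) ^+ k * z ^+ (n.-1 - k))); last first.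
    by rewrite big_distrl; apply: eq_bigr => i _ /=; ring.
  rewrite hHz exprMn -exprM (_ : (n - k.+1 = n.-1 - k)%N); last lia.
  rewrite (_ : Py ^+ (2 * n) = Py ^+ (2 * (n.-1 - k)) * Py ^+ (2 * k.+1 - 1) * Py); last first.
    by rewrite -exprD -exprSr; congr (_ ^+ _); lia.
  by rewrite exprS; field.
have hQ2 : Q2fun a_ eps xi a Pa Py = Py ^+ (2 * n) / 2 *
    (\sum_(i < n) xi i ^+ 2 / Delta a_ eps i a * (PP a_ i).[z]
     + \sum_(i < n) \sum_(j < n | j != i)
         xi i * xi j / Num.sqrt (Delta a_ eps i a * Delta a_ eps j a)
         * ((z - a) * (PP2 a_ i j).[z])).
  rewrite /Q2fun -/H big_add1 /= big_mkord.
  under [X in _ = _ * (X + _)]eq_bigr => i _ do rewrite -(@sum1 _ _ a_ i z) mulr_sumr.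
  under [X in _ = _ * (_ + X)]eq_bigr => i _ do
    (under eq_bigr => j hj do rewrite -(@sum2 _ _ a_ i j z a hn hj) mulr_sumr;
     rewrite exchange_big).
  rewrite [X in _ = _ * (X + _)]exchange_big [X in _ = _ * (_ + X)]exchange_big -big_split mulr_sumr /=.
  apply: eq_bigr => k _ /=.
  have hk := ltn_ord k.
  rewrite /ctilde (_ : (k.+1%:Z - 1) = k); last lia.
  rewrite (_ : (k.+1%:Z - 2) = k%:Z - 1); last lia.
  set S1 := \sum_(i < n) xi i ^+ 2 / _ * sig1 a_ i k.
  set S2 := \sum_(i < n) \sum_(j < n | j != i) _ * (sig2 a_ i j k + a * sig2 a_ i j (k%:Z - 1)).
  have -> : \sum_(i < n) xi i ^+ 2 / Delta a_ eps i a * ((-1) ^+ k * sig1 a_ i k * z ^+ (n.-1 - k))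
      = S1 * ((-1) ^+ k * z ^+ (n.-1 - k)).
    by rewrite /S1 big_distrl; apply: eq_bigr => i _ /=; ring.
  have -> : \sum_(i < n) \sum_(j < n | j != i)
         xi i * xi j / Num.sqrt (Delta a_ eps i a * Delta a_ eps j a)
         * ((-1) ^+ k * (sig2 a_ i j k + a * sig2 a_ i j (k%:Z - 1)) * z ^+ (n.-1 - k))
      = S2 * ((-1) ^+ k * z ^+ (n.-1 - k)).
    rewrite /S2 big_distrl; apply: eq_bigr => i _ /=.
    by rewrite big_distrl; apply: eq_bigr => j _ /=; ring.
  rewrite hHz exprMn -exprM (_ : (n - k.+1 = n.-1 - k)%N); last lia.
  rewrite (_ : Py ^+ (2 * n) = Py ^+ (2 * (n.-1 - k)) * Py ^+ (2 * k.+1)); last first.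
    by rewrite -exprD; congr (_ ^+ _); lia.
  by rewrite !exprS; field.
rewrite -/H.
have hR : \sum_(1 <= k < n.+1) \sum_(1 <= l < n.+1)
        Qkl a_ eps xi k l * H ^+ (2 * n - k - l) * Py ^+ (2 * (k + l))
    = - (Py ^+ (2 * n) * Py ^+ (2 * n)) *
      \sum_(i < n) eps i * xi i ^+ 2 * (PP a_ i).[z] ^+ 2.
  under eq_bigr => k _ do rewrite big_add1 big_mkord.
  rewrite big_add1 big_mkord /=.
  have e : forall i, eps i * xi i ^+ 2 * (PP a_ i).[z] ^+ 2 =
     \sum_(k < n) \sum_(l < n) eps i * xi i ^+ 2 *
        (((-1) ^+ k * sig1 a_ i k * z ^+ (n.-1 - k)) * ((-1) ^+ l * sig1 a_ i l * z ^+ (n.-1 - l))).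
    move=> i; rewrite [(PP a_ i).[z] ^+ 2]expr2 -{1}(@sum1 _ _ a_ i z) big_distrl /= mulr_sumr.
    apply: eq_bigr => k _ /=; rewrite -(@sum1 _ _ a_ i z) big_distrr /= mulr_sumr.
    by apply: eq_bigr => l _ /=; ring.
  under [X in _ = _ * X]eq_bigr => i _ do rewrite e.
  rewrite [X in _ = _ * X]exchange_big /=.
  under [X in _ = _ * X]eq_bigr => k _ do rewrite exchange_big /=.
  rewrite mulr_sumr; apply: eq_bigr => k _.
  rewrite mulr_sumr; apply: eq_bigr => l _.
  have hk := ltn_ord k; have hl := ltn_ord l.
  rewrite /Qkl (_ : (k.+1%:Z - 1) = k); last lia.
  rewrite (_ : (l.+1%:Z - 1) = l); last lia.
  rewrite (_ : \sum_(i < n) eps i * xi i ^+ 2 *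
        ((-1) ^+ k * sig1 a_ i k * z ^+ (n.-1 - k) * ((-1) ^+ l * sig1 a_ i l * z ^+ (n.-1 - l)))
     = (\sum_(i < n) eps i * xi i ^+ 2 * sig1 a_ i k * sig1 a_ i l) *
       ((-1) ^+ k * (-1) ^+ l * (z ^+ (n.-1 - k) * z ^+ (n.-1 - l)))); last first.
    by rewrite big_distrl; apply: eq_bigr => i _ /=; ring.
  rewrite hHz exprMn -exprM (_ : (2 * n - k.+1 - l.+1 = (n.-1 - k) + (n.-1 - l))%N); last lia.
  rewrite exprD.
  rewrite (_ : Py ^+ (2 * n) * Py ^+ (2 * n) = Py ^+ (2 * ((n.-1 - k) + (n.-1 - l))) * Py ^+ (2 * (k.+1 + l.+1))); last first.
    by rewrite -!exprD; congr (_ ^+ _); lia.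
  rewrite (_ : (k.+1 + l.+1).+1 = (k + l).+3)%N; last lia.
  rewrite !exprS exprD; ring.
have hPi : Pi ^+ 2 = (z - a) * Py ^+ 2.
  by rewrite -[LHS](addrK (a * Py ^+ 2)) -hH hHz; ring.
have hgF : forall i, (Fpoly a_).[z] = (z - a_ i) * (PP a_ i).[z].
  by move=> i; rewrite (FPP a_ i) hornerM hornerXsubC.
have hg2 : forall i j, j != i ->
    (Fpoly a_).[z] * (PP2 a_ i j).[z] = (PP a_ i).[z] * (PP a_ j).[z].
  move=> i j hj; rewrite (hgF i) (PPP a_ hj) hornerM hornerXsubC.
  rewrite (PPP a_ (i := j) (j := i)); last by rewrite eq_sym.
  by rewrite hornerM hornerXsubC PP2C; ring.
have hv : forall i j, xi i * xi j / Num.sqrt (Delta a_ eps i a * Delta a_ eps j a)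
    = xi i / Num.sqrt (Delta a_ eps i a) * (xi j / Num.sqrt (Delta a_ eps j a)).
  move=> i j; rewrite sqrtrM; last exact: ltW.
  by rewrite invfM; ring.
have key : (z - a) * (\sum_(i < n) xi i / Num.sqrt (Delta a_ eps i a) * (PP a_ i).[z]) ^+ 2
   - (Fpoly a_).[z] * (\sum_(i < n) xi i ^+ 2 / Delta a_ eps i a * (PP a_ i).[z]
     + \sum_(i < n) \sum_(j < n | j != i)
         xi i * xi j / Num.sqrt (Delta a_ eps i a * Delta a_ eps j a)
         * ((z - a) * (PP2 a_ i j).[z]))
   = - \sum_(i < n) eps i * xi i ^+ 2 * (PP a_ i).[z] ^+ 2.
  rewrite expr2 big_distrl /=.
  under eq_bigr => i _ do rewrite big_distrr /=.
  rewrite mulrDr !mulr_sumr -big_split /= -sumrB -sumrN; apply: eq_bigr => i _.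
  rewrite (bigD1 i) //=.
  rewrite (_ : (Fpoly a_).[z] * \sum_(j < n | j != i)
         xi i * xi j / Num.sqrt (Delta a_ eps i a * Delta a_ eps j a) * ((z - a) * (PP2 a_ i j).[z])
      = (z - a) * \sum_(j < n | true && (j != i))
         xi i / Num.sqrt (Delta a_ eps i a) * (PP a_ i).[z] *
         (xi j / Num.sqrt (Delta a_ eps j a) * (PP a_ j).[z])); last first.
    rewrite !mulr_sumr; apply: eq_big => [j //|j hj /=].
    rewrite hv [LHS](_ : _ = xi i / Num.sqrt (Delta a_ eps i a) * (xi j / Num.sqrt (Delta a_ eps j a))
        * (z - a) * ((Fpoly a_).[z] * (PP2 a_ i j).[z])); last by ring.
    by rewrite hg2 //; ring.
  set T := \sum_(j < n | _) _.
  rewrite (hgF i).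
  set s := Num.sqrt (Delta a_ eps i a).
  have hDi := hDa i.
  have hs : s ^+ 2 = Delta a_ eps i a by rewrite sqr_sqrtr // ltW.
  have hs0 : s != 0 by rewrite /s sqrtr_eq0 -ltNge.
  rewrite (_ : xi i / s * (PP a_ i).[z] * (xi i / s * (PP a_ i).[z])
     = xi i ^+ 2 * (PP a_ i).[z] ^+ 2 / s ^+ 2); last by field.
  rewrite hs.
  have hD0 : Delta a_ eps i a != 0 by rewrite gt_eqF.
  move: hD0; rewrite /Delta; case: (heps i) => -> hD0.
    by field; move: hD0; rewrite mul1r.
  by field; move: hD0; rewrite mulN1r oppr_eq0.
rewrite hG hQ1 hQ2 hR.
have sq : forall c d e : R, (- (c / Py) * d * e) ^+ 2 = c ^+ 2 / Py ^+ 2 * d ^+ 2 * e ^+ 2.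
  by move=> c d e; field.
rewrite sq hPi mulNr -mulrN -key; field.
exact: hp.
Qed.
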